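(* Let $G=(V,E)$ be a connected graph with $n\ge2$ vertices, with adjacency eigenvalues $\lambda_1(G)\ge\lambda_2(G)\ge\cdots\ge\lambda_n(G)$. Let $\rho_V(G)=\max_{v\in V}\rho(G-v)$ and $\rho_E(G)=\max_{e\in E}\rho(G-e)$. Then: (a) $\lambda_2(G)<\rho_V(G)\le\rho_E(G)$; (b) if $G$ is non-bipartite, then $-\lambda_n(G)<\rho_E(G)$; (c) if $\Gamma(G)$ is nonempty, then $\rho_\Gamma(G)<\rho_E(G)$, where $\rho_\Gamma(G)=\max_{G_\pi\in\Gamma(G)}\rho(G_\pi)$.
   Context: All graphs are finite, simple and undirected. $G-v$ is obtained by deleting vertex $v$ and its incident edges; $G-e$ is obtained by deleting edge $e$ (keeping all vertices). $\rho(\cdot)$ denotes the spectral radius (largest modulus of an eigenvalue) of the adjacency matrix. A signed graph $G_\pi$ is a pair $(G,\pi)$ with $\pi:E\to\{+1,-1\}$, with adjacency matrix having entry $\pi(\{i,j\})$ for adjacent $i,j$ and $0$ otherwise; $\rho(G_\pi)$ is the largest modulus of its eigenvalues. $\Gamma(G)=\{G_\pi:\ \pi:E\to\{\pm1\},\ \rho(G_\pi)<\rho(G)\}$. *)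

(* Defs.v *)
(* scalars in algC (algebraic complex numbers, an
   algebraically closed numeric field), so every characteristic polynomial
   splits and eigenvalues (with multiplicity) are available. *)
From HB Require Import structures.
From mathcomp Require Import all_boot all_order all_algebra all_field.
Set Implicit Arguments. Unset Strict Implicit. Unset Printing Implicit Defensive.
Import Order.TTheory GRing.Theory Num.Theory.
Local Open Scope ring_scope.

Definition simple_graph n (adj : rel 'I_n) : Prop :=
  (forall i j, adj i j = adj j i) /\ (forall i, ~~ adj i i).

Definition connected_graph n (adj : rel 'I_n) : Prop :=
  forall i j, connect adj i j.

Definition bipartite n (adj : rel 'I_n) : Prop :=
  exists f : 'I_n -> bool, forall i j, adj i j -> f i != f j.

Definition adjmx n (adj : rel 'I_n) : 'M[algC]_n :=
  \matrix_(i, j) (adj i j)%:R.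

Definition del_vertex n (adj : rel 'I_n) (v : 'I_n) : rel 'I_n.-1 :=
  fun x y => adj (lift v x) (lift v y).

Definition del_edge n (adj : rel 'I_n) (a b : 'I_n) : rel 'I_n :=
  fun x y => adj x y && ~~ (((x == a) && (y == b)) || ((x == b) && (y == a))).

(* Signed graph: a signature is given by sg : 'I_n -> 'I_n -> bool
   (true means sign -1), symmetric so that it is a function on edges. *)
Definition signature_ok n (sg : {ffun 'I_n -> {ffun 'I_n -> bool}}) : bool :=
  [forall i, forall j, sg i j == sg j i].

Definition signed_adjmx n (adj : rel 'I_n)
    (sg : {ffun 'I_n -> {ffun 'I_n -> bool}}) : 'M[algC]_n :=
  \matrix_(i, j) (if adj i j then (if sg i j then -1 else 1) else 0).

Lemma char_poly_splits m (A : 'M[algC]_m) :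
  exists s : seq algC, char_poly A == \prod_(z <- s) ('X - z%:P).
Proof.
have [s Hs] := closed_field_poly_normal (char_poly A).
exists s; apply/eqP; rewrite {1}Hs.
by have /monicP -> := char_poly_monic A; rewrite scale1r.
Qed.

Definition eigs m (A : 'M[algC]_m) : seq algC := xchoose (char_poly_splits A).

Definition sorted_eigs m (A : 'M[algC]_m) : seq algC :=
  sort (fun x y => y <= x) (eigs A).

(* lambda_k(A), 1-indexed. *)
Definition lambda m (A : 'M[algC]_m) (k : nat) : algC := nth 0 (sorted_eigs A) k.-1.

Definition spec_rad m (A : 'M[algC]_m) : algC :=
  \big[Num.max/0]_(z <- eigs A) `|z|.

Definition rhoV n (adj : rel 'I_n) : algC :=
  \big[Num.max/0]_(v : 'I_n) spec_rad (adjmx (del_vertex adj v)).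

Definition rhoE n (adj : rel 'I_n) : algC :=
  \big[Num.max/0]_(p : 'I_n * 'I_n | adj p.1 p.2)
     spec_rad (adjmx (del_edge adj p.1 p.2)).

Definition in_Gamma n (adj : rel 'I_n) (sg : {ffun 'I_n -> {ffun 'I_n -> bool}}) : bool :=
  signature_ok sg && (spec_rad (signed_adjmx adj sg) < spec_rad (adjmx adj)).

Definition Gamma_nonempty n (adj : rel 'I_n) : Prop :=
  exists sg, in_Gamma adj sg.

Definition rhoGamma n (adj : rel 'I_n) : algC :=
  \big[Num.max/0]_(sg | in_Gamma adj sg) spec_rad (signed_adjmx adj sg).

(* Main.v *)
Require Import Defs.
From HB Require Import structures.
From mathcomp Require Import all_boot all_order all_algebra all_field.
From mathcomp Require Import ring.
Set Implicit Arguments. Unset Strict Implicit. Unset Printing Implicit Defensive.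
Import Order.TTheory GRing.Theory Num.Theory Num.Def.
Local Open Scope ring_scope.


Definition cstar m n (A : 'M[algC]_(m, n)) : 'M[algC]_(n, m) := map_mx conjC (trmx A).

Lemma cstarM m n p (A : 'M[algC]_(m, n)) (B : 'M[algC]_(n, p)) :
  cstar (A *m B) = cstar B *m cstar A.
Proof. by rewrite /cstar trmx_mul map_mxM. Qed.

Lemma cstarK m n (A : 'M[algC]_(m, n)) : cstar (cstar A) = A.
Proof. by apply/matrixP=> i j; rewrite !mxE conjCK. Qed.

Definition qf m (M : 'M[algC]_m) (y : 'rV[algC]_m) : algC :=
  \sum_i \sum_j y 0 i * M i j * (y 0 j)^*.
Definition nrm m (y : 'rV[algC]_m) : algC := \sum_i y 0 i * (y 0 i)^*.

Lemma qfE m (M : 'M[algC]_m) y : qf M y = (y *m M *m cstar y) 0 0.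
Proof.
rewrite /qf [RHS]mxE exchange_big /=; apply: eq_bigr => j _.
rewrite /cstar [(y *m M) 0 j]mxE big_distrl /=; apply: eq_bigr => i _; by rewrite !mxE.
Qed.

Lemma nrmE m (y : 'rV[algC]_m) : nrm y = (y *m cstar y) 0 0.
Proof. by rewrite /nrm mxE; apply: eq_bigr => i _; rewrite !mxE. Qed.

Lemma nrm_ge0 m (y : 'rV[algC]_m) : 0 <= nrm y.
Proof. by apply: sumr_ge0 => i _; rewrite -normCK exprn_ge0. Qed.

Lemma nrm_eq0 m (y : 'rV[algC]_m) : (nrm y == 0) = (y == 0).
Proof.
apply/idP/idP; last by move/eqP->; rewrite /nrm big1 // => i _; rewrite mxE mul0r.
move=> /eqP H; apply/eqP/rowP => i; rewrite mxE.
have H0 : forall j, predT j -> 0 <= y 0 j * (y 0 j)^*.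
  by move=> j _; rewrite -normCK exprn_ge0.
have /eqP := psumr_eq0P H0 H (isT : predT i).
by rewrite -normCK sqrf_eq0 normr_eq0 => /eqP.
Qed.

Lemma nrm_gt0 m (y : 'rV[algC]_m) : y != 0 -> 0 < nrm y.
Proof. by move=> Hy; rewrite lt_def nrm_eq0 Hy nrm_ge0. Qed.

Section MaxLemmas.
Variable R : numDomainType.
Implicit Types x y c : R.

Lemma mx_cases x y : x \is Num.real -> y \is Num.real ->
  (Num.max x y = x /\ y <= x) \/ (Num.max x y = y /\ x <= y).
Proof. by move=> xr yr; case: (real_leP xr yr) => H; [right|left; split=> //; apply: ltW]. Qed.

Lemma mx_ge_l x y : x \is Num.real -> y \is Num.real -> x <= Num.max x y.
Proof. by move=> xr yr; case: (mx_cases xr yr) => -[-> H] //. Qed.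

Lemma mx_ge_r x y : x \is Num.real -> y \is Num.real -> y <= Num.max x y.
Proof. by move=> xr yr; case: (mx_cases xr yr) => -[-> H] //. Qed.

Lemma mx_real x y : x \is Num.real -> y \is Num.real -> Num.max x y \is Num.real.
Proof. by move=> xr yr; case: (mx_cases xr yr) => -[-> H]. Qed.

Variable I : eqType.
Implicit Types (r : seq I) (P : pred I) (F : I -> R).

Lemma bm_real r P F : (forall i, P i -> F i \is Num.real) ->
  \big[Num.max/0]_(i <- r | P i) F i \is Num.real.
Proof.
move=> HF; elim: r => [|a r IH]; first by rewrite big_nil.
by rewrite big_cons; case: ifP => // Pa; apply: mx_real => //; apply: HF.
Qed.

Lemma bm_ge0 r P F : (forall i, P i -> 0 <= F i) ->
  0 <= \big[Num.max/0]_(i <- r | P i) F i.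
Proof.
move=> HF; elim: r => [|a r IH]; first by rewrite big_nil.
rewrite big_cons; case: ifP => // Pa.
have Fr : F a \is Num.real by apply: ger0_real; apply: HF.
have Br : \big[Num.max/0]_(i <- r | P i) F i \is Num.real by apply: ger0_real.
by apply: le_trans IH _; apply: mx_ge_r.
Qed.

Lemma bm_ge r P F i : (forall i, P i -> 0 <= F i) -> i \in r -> P i ->
  F i <= \big[Num.max/0]_(j <- r | P j) F j.
Proof.
move=> HF; elim: r => [|a r IH] //; rewrite in_cons big_cons => /orP[/eqP<-|ir] Pi.
  rewrite Pi; apply: mx_ge_l; first by apply: ger0_real; apply: HF.
  by apply: ger0_real; apply: bm_ge0.
have Br : \big[Num.max/0]_(i <- r | P i) F i \is Num.real by apply: ger0_real; apply: bm_ge0.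
case: ifP => Pa; last by apply: IH.
apply: le_trans (IH ir Pi) _; apply: mx_ge_r => //.
by apply: ger0_real; apply: HF.
Qed.

Lemma bm_le r P F c : (forall i, P i -> 0 <= F i) -> 0 <= c ->
  (forall i, i \in r -> P i -> F i <= c) ->
  \big[Num.max/0]_(j <- r | P j) F j <= c.
Proof.
move=> HF c0; elim: r => [|a r IH] H; first by rewrite big_nil.
rewrite big_cons; have IH' := IH (fun i ir => H i (mem_behead (s:=a :: r) ir)).
case: ifP => Pa //.
have Fr : F a \is Num.real by apply: ger0_real; apply: HF.
have Br : \big[Num.max/0]_(i <- r | P i) F i \is Num.real by apply: ger0_real; apply: bm_ge0.
case: (mx_cases Fr Br) => -[-> _] //; apply: H => //; exact: mem_head.
Qed.

Lemma bm_attained r P F : (forall i, P i -> 0 <= F i) ->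
  (exists2 i, i \in r & P i) ->
  exists i, [/\ i \in r, P i & \big[Num.max/0]_(j <- r | P j) F j = F i].
Proof.
move=> HF; elim: r => [|a r IH] [i ir Pi] //.
have Br : \big[Num.max/0]_(i <- r | P i) F i \is Num.real by apply: ger0_real; apply: bm_ge0.
rewrite big_cons; case Pa: (P a).
  have Fr : F a \is Num.real by apply: ger0_real; apply: HF.
  case: (mx_cases Fr Br) => -[-> Hle].
    by exists a; split=> //; exact: mem_head.
  have [/hasP [j jr Pj] | Hn] := boolP (has P r).
  - have [k [kr Pk Ek]] := IH (ex_intro2 _ _ j jr Pj).
    by exists k; rewrite in_cons kr orbT Ek.
  - have Hb : \big[Num.max/0]_(i <- r | P i) F i = 0.
      by rewrite big_hasC.
    exists a; split; [exact: mem_head | by [] | ].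
    by apply/le_anti; rewrite Hle andbT Hb; exact: HF.
move: ir; rewrite in_cons => /orP[/eqP Ei|ir]; first by rewrite -Ei Pi in Pa.
have [k [kr Pk Ek]] := IH (ex_intro2 _ _ i ir Pi).
by exists k; rewrite in_cons kr orbT Ek.
Qed.

Lemma bm_mem r1 r2 F : r1 =i r2 -> (forall i, 0 <= F i) ->
  \big[Num.max/0]_(i <- r1) F i = \big[Num.max/0]_(i <- r2) F i.
Proof.
move=> E HF; apply/le_anti/andP; split; apply: bm_le => //; try (by apply: bm_ge0);
  move=> i ir _; apply: bm_ge => //; by rewrite ?E // -E.
Qed.

End MaxLemmas.

Lemma char_poly_simil n (A Q : 'M[algC]_n) : Q \in unitmx ->
  char_poly (invmx Q *m A *m Q) = char_poly A.
Proof.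
move=> Qu; rewrite /char_poly /char_poly_mx.
set iQ := map_mx polyC (invmx Q); set pQ := map_mx polyC Q.
have e : iQ *m pQ = 1%:M by rewrite -map_mxM mulVmx // map_mx1.
have -> : 'X%:M - map_mx polyC (invmx Q *m A *m Q) =
   iQ *m ('X%:M - map_mx polyC A) *m pQ.
  by rewrite mulmxBr mulmxBl scalar_mxC -[_ *m iQ *m pQ]mulmxA e mulmx1 /iQ /pQ -!map_mxM.
rewrite !det_mulmx mulrAC -det_mulmx e det1 mul1r //.
Qed.

Section Spectral.
Variable m : nat.
Variable M : 'M[algC]_m.
Hypothesis Msym : forall i j, M i j = M j i.
Hypothesis Mreal : forall i j, M i j \is Num.real.

Let P := spectralmx M.
Let d := spectral_diag M.
Let Pst := cstar P.

Lemma Mherm : M \is hermsymmx.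
Proof.
apply: realsym_hermsym; last by apply/mxOverP=> i j; exact: Mreal.
by apply/is_hermitianmxP; rewrite expr0 scale1r map_mx_id //; apply/matrixP=> i j; rewrite mxE Msym.
Qed.

Lemma P_unitary : P \is unitarymx.
Proof. exact: spectral_unitarymx. Qed.

Lemma PPst : P *m Pst = 1%:M.
Proof. exact/unitarymxP/P_unitary. Qed.

Lemma PstE : Pst = invmx P.
Proof. by rewrite (invmx_unitary P_unitary). Qed.

Lemma PstP : Pst *m P = 1%:M.
Proof. by rewrite PstE mulVmx // unitarymx_unit // P_unitary. Qed.

Lemma Mspec : M = Pst *m diag_mx d *m P.
Proof.
rewrite PstE; apply/orthomx_spectralP; apply: hermitian_normalmx; exact: Mherm.
Qed.

Lemma d_real k : d 0 k \is Num.real.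
Proof.
have := hermitian_spectral_diag_real Mherm => /mxOverP; apply.
Qed.


Lemma wform (w : 'rV[algC]_m) F :
  (w *m F *m cstar w) 0 0 = \sum_i \sum_j w 0 i * F i j * (w 0 j)^*.
Proof. by rewrite -qfE. Qed.

Lemma spec_qf y : qf M y = \sum_k d 0 k * (`|(y *m Pst) 0 k| ^+ 2).
Proof.
rewrite qfE Mspec !mulmxA -[y *m Pst *m diag_mx d *m P *m cstar y]mulmxA.
have -> : P *m cstar y = cstar (y *m Pst) by rewrite cstarM cstarK.
rewrite mxE; apply: eq_bigr => k _.
by rewrite mul_mx_diag !mxE normCK mulrAC mulrC mulrA.
Qed.

Lemma spec_nrm y : nrm y = \sum_k `|(y *m Pst) 0 k| ^+ 2.
Proof.
rewrite nrmE -[cstar y]mul1mx -PstP -mulmxA.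
have -> : P *m cstar y = cstar (y *m Pst) by rewrite cstarM cstarK.
rewrite mulmxA mxE; apply: eq_bigr => k _; by rewrite !mxE normCK.
Qed.


Lemma row_eig k : row k P *m M = d 0 k *: row k P.
Proof.
rewrite {1}Mspec !mulmxA -row_mul PPst row1 -rowE row_diag_mx -scalemxAl -rowE //.
Qed.

Lemma row_nrm k : nrm (row k P) = 1.
Proof.
have E : (P *m Pst) k k = 1 by rewrite PPst mxE eqxx.
rewrite nrmE -E !mxE; apply: eq_bigr => i _; by rewrite !mxE.
Qed.

Lemma row_inner k l : k != l -> \sum_i (row k P) 0 i * ((row l P) 0 i)^* = 0.
Proof.
move=> kl; have E : (P *m Pst) k l = 0 by rewrite PPst mxE (negbTE kl).
rewrite -[RHS]E [RHS]mxE; apply: eq_bigr => i _; by rewrite !mxE.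
Qed.

Definition Dseq := [seq d 0 k | k <- index_enum 'I_m].

Lemma eigs_perm : perm_eq (eigs M) Dseq.
Proof.
apply: prod_XsubC_eq.
have /eqP <- := xchooseP (char_poly_splits M).
rewrite big_map {1}Mspec PstE char_poly_simil ?unitarymx_unit ?P_unitary //.
rewrite char_poly_trig ?diag_mx_is_trig //.
by apply: eq_bigr => i _; rewrite mxE eqxx.
Qed.

Lemma sr_eq : spec_rad M = \big[Num.max/0]_k `|d 0 k|.
Proof. by rewrite /spec_rad (bm_mem (perm_mem eigs_perm)) ?big_map // => z; exact: normr_ge0. Qed.

Lemma sr_ge0 : 0 <= spec_rad M.
Proof. by rewrite sr_eq; apply: bm_ge0. Qed.

Lemma d_le_sr k : `|d 0 k| <= spec_rad M.
Proof. by rewrite sr_eq; apply: (bm_ge (P := predT) (F := fun k => `|d 0 k|)) => //; rewrite mem_index_enum. Qed.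

Lemma sr_attained : (0 < m)%N -> exists k, spec_rad M = `|d 0 k|.
Proof.
move=> m0; have [k [_ _ E]] := bm_attained (r := index_enum 'I_m) (P := predT)
   (F := fun k => `|d 0 k|) (fun _ _ => normr_ge0 _) (ex_intro2 _ _ (Ordinal m0) (mem_index_enum _) isT).
by exists k; rewrite sr_eq.
Qed.

Lemma R1 y : `|qf M y| <= spec_rad M * nrm y.
Proof.
rewrite spec_qf spec_nrm mulr_sumr; apply: le_trans (ler_norm_sum _ _ _) _.
apply: ler_sum => k _; rewrite normrM (ger0_norm (exprn_ge0 _ (normr_ge0 _))).
by rewrite ler_wpM2r ?exprn_ge0 ?normr_ge0 ?d_le_sr.
Qed.

Lemma R2 y : qf M y = spec_rad M * nrm y -> y *m M = spec_rad M *: y.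
Proof.
move=> H.
have H0 : \sum_k (spec_rad M - d 0 k) * `|(y *m Pst) 0 k| ^+ 2 = 0.
  under eq_bigr do rewrite mulrBl.
  by rewrite sumrB -mulr_sumr -spec_nrm -spec_qf H subrr.
have Hge : forall k, predT k -> 0 <= (spec_rad M - d 0 k) * `|(y *m Pst) 0 k| ^+ 2.
  move=> k _; rewrite mulr_ge0 ?exprn_ge0 // subr_ge0.
  by apply: le_trans (real_ler_norm (d_real k)) (d_le_sr k).
have Hw : (y *m Pst) *m diag_mx d = spec_rad M *: (y *m Pst).
  apply/rowP => k; rewrite mul_mx_diag [LHS]mxE [RHS]mxE.
  have /eqP := psumr_eq0P Hge H0 (isT : predT k).
  rewrite mulf_eq0 sqrf_eq0 normr_eq0 subr_eq0 => /orP[/eqP<-|/eqP->].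
    by rewrite mulrC.
  by rewrite !mul0r mulr0.
by rewrite {1}Mspec !mulmxA Hw -scalemxAl -mulmxA PstP mulmx1.
Qed.

End Spectral.


Definition absv m (y : 'rV[algC]_m) : 'rV[algC]_m := \row_i `|y 0 i|.

Lemma nrm_absv m (y : 'rV[algC]_m) : nrm (absv y) = nrm y.
Proof.
by apply: eq_bigr => i _; rewrite mxE conj_Creal ?normr_real // -expr2 normCK.
Qed.

Lemma qf_eig m (M : 'M[algC]_m) y z : y *m M = z *: y -> qf M y = z * nrm y.
Proof. by move=> E; rewrite qfE nrmE E -scalemxAl mxE. Qed.

Lemma qf_abs m (M N : 'M[algC]_m) y : (forall i j, `|M i j| <= N i j) ->
  `|qf M y| <= qf N (absv y).
Proof.
move=> H; apply: le_trans (ler_norm_sum _ _ _) _; apply: ler_sum => i _.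
apply: le_trans (ler_norm_sum _ _ _) _; apply: ler_sum => j _.
rewrite !mxE [in X in _ <= X]conj_Creal ?normr_real // !normrM norm_conjC.
by rewrite ler_wpM2r ?normr_ge0 // ler_wpM2l ?normr_ge0.
Qed.

Lemma qf_ge0 m (N : 'M[algC]_m) (y : 'rV[algC]_m) : (forall i j, 0 <= N i j) -> (forall i, 0 <= y 0 i) ->
  0 <= qf N y.
Proof.
move=> HN Hy; apply: sumr_ge0 => i _; apply: sumr_ge0 => j _.
by rewrite conj_Creal ?ger0_real // !mulr_ge0.
Qed.

Lemma absv_ge0 m (y : 'rV[algC]_m) i : 0 <= absv y 0 i.
Proof. by rewrite mxE normr_ge0. Qed.

Lemma absv_eq0 m (y : 'rV[algC]_m) : (absv y == 0) = (y == 0).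
Proof. by rewrite -!nrm_eq0 nrm_absv. Qed.

Lemma RA m (M : 'M[algC]_m) y z :
  (forall i j, M i j = M j i) -> (forall i j, 0 <= M i j) ->
  y *m M = z *: y -> `|z| = spec_rad M ->
  absv y *m M = spec_rad M *: absv y.
Proof.
move=> Msym Mge0 E Ez.
have Mreal : forall i j, M i j \is Num.real by move=> i j; apply: ger0_real.
apply: R2 => //.
have H1 : qf M (absv y) <= spec_rad M * nrm (absv y).
  apply: le_trans (R1 Msym Mreal _).
  by rewrite real_ler_norm // ger0_real // qf_ge0 // => i; exact: absv_ge0.
apply/le_anti; rewrite H1 /= nrm_absv -Ez.
have -> : `|z| * nrm y = `|qf M y| by rewrite (qf_eig E) normrM (ger0_norm (nrm_ge0 _)).
by apply: qf_abs => i j; rewrite ger0_norm.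
Qed.

Section Graph.
Variable n : nat.
Variable adj : rel 'I_n.

Lemma L_cross : connected_graph adj -> forall (p : pred 'I_n) i j, p i -> ~~ p j ->
  exists a b, [/\ adj a b, p a & ~~ p b].
Proof.
move=> Hc p i j Hi Hj; have /connectP [s Hs Hl] := Hc i j.
elim: s i Hi Hs Hl => [|x s IH] i Hi /=; first by move=> _ E; move: Hj; rewrite E Hi.
move=> /andP [aix Hs] Hl; case Px: (p x); first by apply: (IH x).
by exists i, x; rewrite Px.
Qed.

Lemma sg_del_edge a b : simple_graph adj -> simple_graph (del_edge adj a b).
Proof.
move=> [Hs Hi]; split.
  move=> i j; rewrite /del_edge Hs; congr (_ && ~~ _).
  by rewrite orbC; congr (_ || _); rewrite andbC.
by move=> i; rewrite /del_edge (negbTE (Hi i)).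
Qed.

Lemma sg_del_vertex v : simple_graph adj -> simple_graph (del_vertex adj v).
Proof. by move=> [Hs Hi]; split; [move=> i j; rewrite /del_vertex Hs | move=> i; rewrite /del_vertex Hi]. Qed.

End Graph.

Lemma adj_sym m (adj : rel 'I_m) : simple_graph adj -> forall i j, adjmx adj i j = adjmx adj j i.
Proof. by move=> [Hs _] i j; rewrite !mxE Hs. Qed.

Lemma adj_ge0 m (adj : rel 'I_m) i j : 0 <= adjmx adj i j.
Proof. by rewrite mxE ler0n. Qed.

Lemma adj_real m (adj : rel 'I_m) i j : adjmx adj i j \is Num.real.
Proof. by apply: ger0_real; apply: adj_ge0. Qed.

Lemma rV_neq0 m (y : 'rV[algC]_m) : y != 0 -> exists i, y 0 i != 0.
Proof.
move=> Hy; apply/existsP; apply: contraNT Hy; rewrite negb_exists => /forallP H.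
by apply/eqP/rowP => i; rewrite mxE; apply/eqP; rewrite -[_ == _]negbK H.
Qed.

Lemma sum_ge_term m (F : 'I_m -> algC) k : (forall i, 0 <= F i) -> F k <= \sum_i F i.
Proof.
move=> HF; rewrite (bigD1 k) //= lerDl; apply: sumr_ge0 => i _; exact: HF.
Qed.

Lemma qf_restr m (M : 'M[algC]_m) (M' : 'M[algC]_m.-1) (v : 'I_m) (y : 'rV[algC]_m)
   (y' : 'rV[algC]_m.-1) :
  y 0 v = 0 -> (forall i, y' 0 i = y 0 (lift v i)) ->
  (forall i j, M' i j = M (lift v i) (lift v j)) ->
  qf M y = qf M' y' /\ nrm y = nrm y'.
Proof.
move=> Hv Hy HM; split.
  rewrite /qf (bigD1_ord v) //= Hv big1 ?add0r; last by move=> j _; rewrite !mul0r.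
  apply: eq_bigr => i _; rewrite (bigD1_ord v) //= Hv conjC0 mulr0 add0r.
  by apply: eq_bigr => j _; rewrite HM !Hy.
rewrite /nrm (bigD1_ord v) //= Hv mul0r add0r.
by apply: eq_bigr => i _; rewrite Hy.
Qed.

Lemma ZP m (adj : rel 'I_m) (z : 'rV[algC]_m) c v :
  simple_graph adj -> connected_graph adj -> (forall i, 0 <= z 0 i) ->
  z *m adjmx adj = c *: z -> z 0 v = 0 -> z = 0.
Proof.
move=> Hs Hc Hz E Hv; apply/eqP; apply: contraT => Hn.
have [j Hj] := rV_neq0 Hn.
have [a [b [ab /eqP za zb]]] := L_cross Hc (p := fun i => z 0 i == 0) (i := v) (j := j) (introT eqP Hv) Hj.
have := congr1 (fun w : 'rV[algC]_m => w 0 a) E; rewrite /= !mxE za mulr0.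
move=> H0.
have : z 0 b * adjmx adj b a <= \sum_i z 0 i * adjmx adj i a.
  by apply: (sum_ge_term (F := fun i => z 0 i * adjmx adj i a)) => i; rewrite mulr_ge0 // adj_ge0.
rewrite H0 mxE -(proj1 Hs) ab mulr1 => H1.
by move: zb; rewrite eq_le H1 Hz.
Qed.

Lemma PE m (M : 'M[algC]_m) (p : 'rV[algC]_m) mu :
  (forall i j, M i j = M j i) -> (forall i j, 0 <= M i j) -> (0 < m)%N ->
  (forall i, 0 < p 0 i) -> p *m M = mu *: p -> mu = spec_rad M.
Proof.
move=> Msym Mge0 m0 Hp E.
have Mreal : forall i j, M i j \is Num.real by move=> i j; apply: ger0_real.
have [k Ek] := sr_attained Msym Mreal m0.
set r := row k (spectralmx M).
have Hr := RA Msym Mge0 (row_eig Msym Mreal k) (esym Ek).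
set S := \sum_i absv r 0 i * p 0 i.
have S0 : 0 < S.
  have rn : r != 0 by rewrite -nrm_eq0 /r row_nrm ?oner_eq0.
  have [i ri] := rV_neq0 rn.
  apply: lt_le_trans (sum_ge_term (F := fun i => absv r 0 i * p 0 i) i _).
    by rewrite mulr_gt0 // mxE normr_gt0.
  by move=> j; rewrite mulr_ge0 ?absv_ge0 // ltW.
have E1 : ((absv r *m M) *m p^T) 0 0 = spec_rad M * S.
  rewrite Hr -scalemxAl mxE /S mxE; apply: congr1; by apply: eq_bigr => l _; rewrite !mxE.
have E2 : ((absv r *m M) *m p^T) 0 0 = mu * S.
  rewrite -mulmxA; have -> : M *m p^T = mu *: p^T.
    rewrite -[M]trmxK -trmx_mul.
    have -> : M^T = M by apply/matrixP => i j; rewrite mxE Msym.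
    by rewrite E linearZ.
  by rewrite -scalemxAr mxE /S mxE; apply: congr1; apply: eq_bigr => l _; rewrite !mxE.
by apply: (mulIf (lt0r_neq0 S0)); rewrite -E1 -E2.
Qed.

Lemma TS m (adj : rel 'I_m) k1 k2 : simple_graph adj -> connected_graph adj -> k1 != k2 ->
  spectral_diag (adjmx adj) 0 k1 = spec_rad (adjmx adj) ->
  spectral_diag (adjmx adj) 0 k2 = spec_rad (adjmx adj) -> False.
Proof.
move=> Hs Hc k12 E1 E2.
set A := adjmx adj.
have Asym := adj_sym Hs; have Areal := @adj_real m adj; have Age0 := @adj_ge0 m adj.
set p1 := row k1 (spectralmx A); set p2 := row k2 (spectralmx A).
have e1 : p1 *m A = spec_rad A *: p1 by rewrite row_eig // E1.
have e2 : p2 *m A = spec_rad A *: p2 by rewrite row_eig // E2.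
have p1n : p1 != 0 by rewrite -nrm_eq0 /p1 row_nrm ?oner_eq0.
have [v Hv] := rV_neq0 p1n.
set y := p2 0 v *: p1 - p1 0 v *: p2.
have yv : y 0 v = 0 by rewrite !mxE mulrC subrr.
have yA : y *m A = spec_rad A *: y.
  rewrite /y mulmxBl -!scalemxAl e1 e2 scalerBr !scalerA.
  by rewrite [spec_rad A * (p2 0 v)]mulrC [spec_rad A * (p1 0 v)]mulrC.
have yn : y != 0.
  have H : \sum_i y 0 i * (p2 0 i)^* = - p1 0 v.
    rewrite (eq_bigr (fun i => p2 0 v * (p1 0 i * (p2 0 i)^*) - p1 0 v * (p2 0 i * (p2 0 i)^*))); last first.
      by move=> i _; rewrite !mxE mulrBl !mulrA.
    rewrite sumrB -!mulr_sumr.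
    have -> : \sum_i p1 0 i * (p2 0 i)^* = 0 by apply: row_inner.
    have -> : \sum_i p2 0 i * (p2 0 i)^* = 1 by have := row_nrm A k2.
    by rewrite mulr0 mulr1 sub0r.
  apply: contraNneq Hv => y0; move: H; rewrite y0.
  have -> : \sum_i (0 : 'rV[algC]_m) 0 i * (p2 0 i)^* = 0 by apply: big1 => i _; rewrite mxE mul0r.
  by move=> /esym /eqP; rewrite oppr_eq0.
have Hy := RA Asym Age0 yA (ger0_norm (sr_ge0 Asym Areal)).
have := ZP Hs Hc (@absv_ge0 _ y) Hy (v := v); rewrite mxE yv normr0 => /(_ erefl) /eqP.
by rewrite absv_eq0 (negbTE yn).
Qed.

Lemma RE m (M : 'M[algC]_m) (x : 'rV[algC]_m) z :
  (forall i j, M i j \is Num.real) -> z \is Num.real -> x != 0 -> x *m M = z *: x ->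
  exists y : 'rV[algC]_m, [/\ forall i, y 0 i \is Num.real, y != 0 & y *m M = z *: y].
Proof.
move=> Mr zr xn E.
have MR : M \is a mxOver Num.real by apply/mxOverP.
set xr := map_mx (@Re _) x; set xi := map_mx (@Im _) x.
have xrR : xr \is a mxOver Num.real by apply/mxOverP => i j; rewrite mxE Creal_Re.
have xiR : xi \is a mxOver Num.real by apply/mxOverP => i j; rewrite mxE Creal_Im.
have ZR : forall w : 'rV[algC]_m, w \is a mxOver Num.real -> z *: w \is a mxOver Num.real.
  by move=> w /mxOverP Hw; apply/mxOverP => i j; rewrite mxE rpredM.
have xdec : x = xr + 'i *: xi by apply/matrixP => i j; rewrite !mxE -Crect.
move: E; rewrite {1 2}xdec mulmxDl -scalemxAl scalerDr [z *: ('i *: _)]scalerA mulrC -scalerA => E.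
have Er := congr1 (map_mx (@Re _)) E.
have Ei := congr1 (map_mx (@Im _)) E.
rewrite !Remx_rect ?mxOverM ?ZR // in Er.
rewrite !Immx_rect ?mxOverM ?ZR // in Ei.
have [xr0|xrn] := eqVneq xr 0.
  exists xi; split => //; first by move=> i; apply: (mxOverP xiR).
  by apply: contraNneq xn => xi0; rewrite xdec xr0 xi0 scaler0 addr0.
exists xr; split => //; by move=> i; apply: (mxOverP xrR).
Qed.


Lemma pair_ge_two m (F : 'I_m -> 'I_m -> algC) a b : (forall i j, 0 <= F i j) -> a != b ->
  F a b + F b a <= \sum_i \sum_j F i j.
Proof.
move=> HF ab; rewrite (bigD1 a) //=; apply: lerD; first by apply: sum_ge_term.
rewrite (bigD1 b) /=; last by rewrite eq_sym.
rewrite -[F b a]addr0; apply: lerD; first by apply: sum_ge_term.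
by apply: sumr_ge0 => i _; apply: sumr_ge0.
Qed.

Lemma arith1 (mu rho N t c : algC) : 0 <= rho -> rho <= mu -> 0 < c -> 0 <= N ->
  t = c / (mu + 1) -> mu * N + t * c + c * t <= rho * (N + t * t) -> False.
Proof.
move=> r0 rmu c0 N0 tE H.
have mu0 : 0 <= mu by apply: le_trans rmu.
have mu1 : 0 < mu + 1 by apply: ltr_wpDl.
have t0 : 0 < t by rewrite tE divr_gt0.
have H2 : mu * N + t * c + c * t <= mu * N + mu * (t * t).
  apply: le_trans H _; rewrite -mulrDr ler_wpM2r // addr_ge0 // mulr_ge0 // ltW //.
rewrite -addrA lerD2l mulrC -mulrDl mulrA ler_pM2r // in H2.
have H3 : (c + c) * (mu + 1) <= mu * c.
  by rewrite -(ler_pM2r mu1) in H2; move: H2; rewrite tE -mulrA divfK // lt0r_neq0.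
have : (c + c) * (mu + 1) > mu * c.
  have cc0 : 0 < c + c by rewrite addr_gt0.
  apply: le_lt_trans (_ : mu * c <= (c + c) * mu) _.
    by rewrite mulrC ler_wpM2r // lerDl ltW.
  by rewrite ltr_pM2l // ltrDl.
by move=> /lt_le_trans /(_ H3); rewrite ltxx.
Qed.

Lemma EB m (adj : rel 'I_m) (S : 'M[algC]_m) (x y : 'rV[algC]_m) mu a b p q :
  simple_graph adj -> (forall i j, S i j = S j i) -> (forall i j, ~~ adj i j -> S i j = 0) ->
  (forall i j, adj i j -> `|S i j| = 1) -> (forall i j, S i j \is Num.real) ->
  (forall i, x 0 i \is Num.real) ->
  x *m S = mu *: x -> x 0 a * S a b * x 0 b <= 0 ->
  (forall i, `|x 0 i| <= y 0 i) -> p != q ->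
  mu * nrm x + (y 0 p * adjmx (del_edge adj a b) p q * y 0 q - x 0 p * S p q * x 0 q)
    + (y 0 q * adjmx (del_edge adj a b) q p * y 0 p - x 0 q * S q p * x 0 p)
  <= qf (adjmx (del_edge adj a b)) y.
Proof.
move=> Hs Ssym S0 S1 Sr xr E Hab Hy pq.
set A' := adjmx (del_edge adj a b).
have y0 : forall i, 0 <= y 0 i by move=> i; apply: le_trans (Hy i); exact: normr_ge0.
have yr : forall i, y 0 i \is Num.real by move=> i; apply: ger0_real.
have qfS : mu * nrm x = \sum_i \sum_j x 0 i * S i j * x 0 j.
  rewrite -(qf_eig E); apply: eq_bigr => i _; apply: eq_bigr => j _; by rewrite conj_Creal.
have qfA : qf A' y = \sum_i \sum_j y 0 i * A' i j * y 0 j.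
  by apply: eq_bigr => i _; apply: eq_bigr => j _; rewrite conj_Creal.
set T := fun i j => y 0 i * A' i j * y 0 j - x 0 i * S i j * x 0 j.
have Tsum : qf A' y = mu * nrm x + \sum_i \sum_j T i j.
  rewrite qfA qfS /T; under [X in _ = _ + X]eq_bigr do rewrite sumrB.
  by rewrite sumrB addrC subrK.
have T0 : forall i j, 0 <= T i j.
  move=> i j; rewrite /T subr_ge0.
  have [rem|nrem] := boolP (((i == a) && (j == b)) || ((i == b) && (j == a))).
  - have -> : A' i j = 0 by rewrite /A' mxE /del_edge rem andbF.
    rewrite mulr0 mul0r.
    move: rem => /orP [/andP [/eqP -> /eqP ->] | /andP [/eqP -> /eqP ->]] //.
    by rewrite Ssym; move: Hab; congr (_ <= _); ring.
  - have -> : A' i j = adjmx adj i j by rewrite !mxE /del_edge (negbTE nrem) andbT.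
    apply: le_trans (_ : x 0 i * S i j * x 0 j <= `|x 0 i| * adjmx adj i j * `|x 0 j|) _.
      case: (boolP (adj i j)) => aij.
        rewrite mxE aij /= mulr1.
        have -> : `|x 0 i| * `|x 0 j| = `|x 0 i * S i j * x 0 j| by rewrite !normrM S1 // mulr1.
        by apply: real_ler_norm; rewrite !rpredM ?xr ?Sr.
      by rewrite S0 // mxE (negbTE aij) /= !mulr0 !mul0r.
    apply: ler_pM; rewrite ?mulr_ge0 ?normr_ge0 ?adj_ge0 //.
    by rewrite ler_wpM2r ?adj_ge0.
rewrite Tsum -addrA lerD2l; exact: pair_ge_two.
Qed.

Lemma U m (adj : rel 'I_m) (S : 'M[algC]_m) (x : 'rV[algC]_m) mu :
  simple_graph adj -> connected_graph adj ->
  (forall i j, S i j = S j i) -> (forall i j, ~~ adj i j -> S i j = 0) ->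
  (forall i j, adj i j -> `|S i j| = 1) -> (forall i j, S i j \is Num.real) ->
  (forall i, x 0 i \is Num.real) -> x != 0 -> mu \is Num.real -> x *m S = mu *: x ->
  (exists a b, adj a b /\ mu < spec_rad (adjmx (del_edge adj a b))) \/
  ((forall i, x 0 i != 0) /\ (forall i j, adj i j -> 0 < S i j * x 0 i * x 0 j)).
Proof.
move=> Hs Hc Ssym S0 S1 Sr xr xn mur E.
have [Hsym Hirr] := Hs.
have N0 : 0 < nrm x by apply: nrm_gt0.
have A'facts : forall a b, (forall i j, adjmx (del_edge adj a b) i j = adjmx (del_edge adj a b) j i)
    /\ (forall i j, adjmx (del_edge adj a b) i j \is Num.real).
  by move=> a b; split; [apply: adj_sym; apply: sg_del_edge | apply: adj_real].
have qfle : forall a b (y : 'rV[algC]_m), (forall i, 0 <= y 0 i) ->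
   qf (adjmx (del_edge adj a b)) y <= spec_rad (adjmx (del_edge adj a b)) * nrm y.
  move=> a b y y0; have [As Ar] := A'facts a b.
  apply: le_trans (R1 As Ar y); apply: real_ler_norm; apply: ger0_real.
  by apply: qf_ge0 => // i j; exact: adj_ge0.
have srr : forall a b, spec_rad (adjmx (del_edge adj a b)) \is Num.real.
  by move=> a b; have [As Ar] := A'facts a b; apply: ger0_real; apply: sr_ge0.
have [/existsP [u0 /eqP xu0] | allnz] := boolP [exists u, x 0 u == 0].
  left.
  have [j xj] := rV_neq0 xn.
  have [u [v [uv /eqP xu xv]]] := L_cross Hc (p := fun i => x 0 i == 0) (introT eqP xu0) xj.
  have Eu : \sum_i x 0 i * S i u = 0.
    by have := congr1 (fun w : 'rV[algC]_m => w 0 u) E; rewrite /= !mxE xu mulr0.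
  have : [exists w, (w != v) && (x 0 w * S w u != 0)].
    apply: contraT; rewrite negb_exists => /forallP H.
    have : \sum_i x 0 i * S i u = x 0 v * S v u.
      rewrite (bigD1 v) //= big1 ?addr0 // => i iv.
      by move: (H i); rewrite iv /= negbK => /eqP.
    rewrite Eu => /esym /eqP; rewrite mulf_eq0 (negbTE xv) /= -normr_eq0 S1 ?oner_eq0 //.
    by rewrite Hsym.
  move=> /existsP [w /andP [wv]]; rewrite mulf_eq0 negb_or => /andP [xw Sw].
  have aw : adj u w.
    rewrite Hsym; apply: contraNT Sw => H; apply/eqP; exact: S0.
  have uw : u != w by apply: contraNneq xw => <-; rewrite xu.
  have uv' : u != v by apply: contraNneq xv => <-; rewrite xu.
  exists u, w; split => //.
  have [As Ar] := A'facts u w.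
  set c := `|x 0 v|.
  have c0 : 0 < c by rewrite normr_gt0.
  rewrite real_ltNge ?srr //; apply/negP => Hle.
  have rho0 : 0 <= spec_rad (adjmx (del_edge adj u w)) by apply: sr_ge0.
  have mu0 : 0 <= mu by apply: le_trans Hle.
  set t := c / (mu + 1).
  have t0 : 0 <= t by rewrite divr_ge0 ?addr_ge0 // ltW.
  have tr : t \is Num.real by apply: ger0_real.
  set y := \row_i (`|x 0 i| + (i == u)%:R * t).
  have Hy : forall i, `|x 0 i| <= y 0 i by move=> i; rewrite mxE lerDl mulr_ge0 ?ler0n.
  have y0 : forall i, 0 <= y 0 i by move=> i; apply: le_trans (Hy i); exact: normr_ge0.
  have Hab : x 0 u * S u w * x 0 w <= 0 by rewrite xu !mul0r.
  have := EB Hs Ssym S0 S1 Sr xr E Hab Hy uv'.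
  have yu : y 0 u = t by rewrite mxE xu normr0 eqxx mul1r add0r.
  have yv : y 0 v = c by rewrite mxE eq_sym (negbTE uv') mul0r addr0.
  have A1 : adjmx (del_edge adj u w) u v = 1.
    by rewrite mxE /del_edge uv eqxx eq_sym (negbTE wv) (negbTE uw).
  have A2 : adjmx (del_edge adj u w) v u = 1 by rewrite As.
  rewrite yu yv A1 A2 xu !mulr1 !mul0r mulr0 !subr0 => H.
  have Ny : nrm y = nrm x + t * t.
    rewrite /nrm (bigD1 u) //= [in RHS](bigD1 u) //= xu mul0r add0r yu conj_Creal // addrC.
    congr (_ + _); apply: eq_bigr => i iu.
    rewrite mxE (negbTE iu) mul0r addr0 conj_Creal ?normr_real //.
    by rewrite -expr2 normCK.
  apply: (arith1 rho0 Hle c0 (ltW N0) (erefl t)).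
  by apply: le_trans H _; rewrite -Ny; apply: qfle.
have nz : forall i, x 0 i != 0.
  by move=> i; apply: contraNneq allnz => xi; apply/existsP; exists i; rewrite xi.
have [/existsP [a /existsP [b /andP [ab neg]]] | nofr] :=
   boolP [exists a, exists b, adj a b && (x 0 a * S a b * x 0 b < 0)].
  left; exists a, b; split => //.
  have abn : a != b by apply: contraTneq ab => ->; rewrite (negbTE (Hirr b)).
  have Hy : forall i, `|x 0 i| <= absv x 0 i by move=> i; rewrite mxE.
  have := EB Hs Ssym S0 S1 Sr xr E (ltW neg) Hy abn.
  have A1 : adjmx (del_edge adj a b) a b = 0 by rewrite mxE /del_edge !eqxx andbF.
  have A2 : adjmx (del_edge adj a b) b a = 0 by rewrite mxE /del_edge !eqxx /= orbT andbF.
  have e : x 0 b * S b a * x 0 a = x 0 a * S a b * x 0 b by rewrite Ssym; ring.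
  rewrite A1 A2 e !mulr0 !mul0r !sub0r => H.
  have H2 : mu * nrm x < spec_rad (adjmx (del_edge adj a b)) * nrm x.
    have H1 : mu * nrm x < mu * nrm x + - (x 0 a * S a b * x 0 b) + - (x 0 a * S a b * x 0 b).
      by rewrite -addrA ltrDl addr_gt0 // oppr_gt0.
    have H3 : qf (adjmx (del_edge adj a b)) (absv x) <= spec_rad (adjmx (del_edge adj a b)) * nrm x.
      by rewrite -(nrm_absv x); apply: qfle => i; exact: absv_ge0.
    exact: lt_le_trans H1 (le_trans H H3).
  by rewrite -(ltr_pM2r N0).
right; split => // i j aij.
have Hn : ~~ (x 0 i * S i j * x 0 j < 0).
  by apply: contra nofr => H; apply/existsP; exists i; apply/existsP; exists j; rewrite aij H.
have Xr : x 0 i * S i j * x 0 j \is Num.real by rewrite !rpredM.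
rewrite lt_def; apply/andP; split.
  by rewrite mulf_neq0 ?nz // mulf_neq0 ?nz // -normr_eq0 S1 ?oner_eq0.
by move: Hn; rewrite real_ltNge ?Xr ?real0 ?negbK // [S i j * x 0 i]mulrC.
Qed.


Lemma size_Dseq m (M : 'M[algC]_m) : size (Dseq M) = m.
Proof. by rewrite /Dseq size_map /index_enum unlock -enumT size_enum_ord. Qed.

Lemma rhoE_ge n (adj : rel 'I_n) a b : simple_graph adj -> adj a b ->
  spec_rad (adjmx (del_edge adj a b)) <= rhoE adj.
Proof.
move=> Hs ab.
have HF : forall p : 'I_n * 'I_n, (fun p => adj p.1 p.2) p ->
    0 <= spec_rad (adjmx (del_edge adj p.1 p.2)).
  by move=> p _; apply: sr_ge0; [apply: adj_sym; apply: sg_del_edge | apply: adj_real].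
exact: (bm_ge (r := index_enum _) (P := fun p => adj p.1 p.2)
   (F := fun p => spec_rad (adjmx (del_edge adj p.1 p.2))) (i := (a, b)) HF (mem_index_enum _) ab).
Qed.

Lemma eig_in_D m (M : 'M[algC]_m) z : (forall i j, M i j = M j i) -> (forall i j, M i j \is Num.real) ->
  z \in eigs M -> exists k, z = spectral_diag M 0 k.
Proof.
move=> Ms Mr; rewrite (perm_mem (eigs_perm Ms Mr)) => /mapP [k _ ->]; by exists k.
Qed.

Lemma real_sign (a b : algC) : a \is Num.real -> b \is Num.real -> a * b < 0 ->
  (0 < a) != (0 < b).
Proof.
move=> ar br H; have [a0|a0] := boolP (0 < a); have [b0|b0] := boolP (0 < b) => //=.
  by move: H; rewrite real_ltNge ?rpredM ?real0 // mulr_ge0 // ltW.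
have a0' : a <= 0 by move: a0; rewrite real_ltNge ?real0 // negbK.
have b0' : b <= 0 by move: b0; rewrite real_ltNge ?real0 // negbK.
by move: H; rewrite real_ltNge ?rpredM ?real0 // mulr_le0.
Qed.

Lemma partb n (adj : rel 'I_n) : simple_graph adj -> connected_graph adj -> (2 <= n)%N ->
  ~ bipartite adj -> - lambda (adjmx adj) n < rhoE adj.
Proof.
move=> Hs Hc n2 nbip.
set A := adjmx adj.
have Asym := adj_sym Hs; have Areal := @adj_real n adj.
have Hmem : lambda A n \in eigs A.
  rewrite /lambda -(mem_sort (fun x y => y <= x)); apply: mem_nth.
  by rewrite size_sort (perm_size (eigs_perm Asym Areal)) size_Dseq ltn_predL; exact: leq_trans n2.
have [k Ek] := eig_in_D Asym Areal Hmem.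
have rk := row_eig Asym Areal k.
have rn : row k (spectralmx A) != 0 by rewrite -nrm_eq0 row_nrm oner_eq0.
have [x [xr xn Ex]] := RE Areal (d_real Asym Areal k) rn rk.
rewrite -Ek in Ex.
have ExN : x *m (- A) = (- lambda A n) *: x by rewrite mulmxN Ex scaleNr.
have lr : lambda A n \is Num.real by rewrite Ek d_real.
have := U Hs Hc (S := - A) (mu := - lambda A n) _ _ _ _ xr xn _ ExN.
case.
- by move=> i j; rewrite !mxE (proj1 Hs).
- by move=> i j aij; rewrite !mxE (negbTE aij) oppr0.
- by move=> i j aij; rewrite !mxE aij normrN normr1.
- by move=> i j; rewrite mxE rpredN.
- by rewrite rpredN.
- move=> [a [b [ab H]]]; apply: lt_le_trans H _; exact: rhoE_ge.
move=> [nz pos]; exfalso; apply: nbip.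
exists (fun i => 0 < x 0 i) => i j aij.
apply: real_sign; rewrite ?xr //.
by move: (pos i j aij); rewrite !mxE aij /= mulN1r mulNr oppr_gt0.
Qed.

Lemma signed_facts n (adj : rel 'I_n) sg : simple_graph adj -> signature_ok sg ->
  (forall i j, signed_adjmx adj sg i j = signed_adjmx adj sg j i) /\
  (forall i j, signed_adjmx adj sg i j \is Num.real).
Proof.
move=> Hs /forallP Hsg; split => i j; rewrite !mxE.
  by rewrite (proj1 Hs) (eqP (forallP (Hsg i) j)).
by case: (adj i j); case: (sg i j); rewrite ?rpredN ?real1 ?real0.
Qed.

Lemma posvec n (adj : rel 'I_n) (S : 'M[algC]_n) (x : 'rV[algC]_n) mu :
  (forall i j, ~~ adj i j -> S i j = 0) -> (forall i j, adj i j -> `|S i j| = 1) ->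
  (forall i, x 0 i \is Num.real) -> (forall i, x 0 i != 0) ->
  (forall i j, adj i j -> 0 < S i j * x 0 i * x 0 j) -> x *m S = mu *: x ->
  absv x *m adjmx adj = mu *: absv x.
Proof.
move=> S0 S1 xr nz pos E; apply/rowP => j.
have Ej := congr1 (fun w : 'rV[algC]_n => w 0 j) E; rewrite /= !mxE in Ej.
have nj : `|x 0 j| != 0 by rewrite normr_eq0.
rewrite !mxE; apply: (mulIf nj).
have H : \sum_i `|x 0 i| * (adj i j)%:R * `|x 0 j| = \sum_i x 0 i * S i j * x 0 j.
  apply: eq_bigr => i _; case: (boolP (adj i j)) => aij.
    rewrite /= mulr1 -[RHS]gtr0_norm; last by move: (pos i j aij); congr (0 < _); ring.
    by rewrite !normrM S1 // mulr1.
  by rewrite S0 // /= !mulr0 !mul0r.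
rewrite mulr_suml.
under eq_bigr do rewrite !mxE.
rewrite H -mulr_suml Ej -mulrA -mulrA; congr (_ * _).
by rewrite -expr2 -expr2 real_normK.
Qed.

Lemma partc_one n (adj : rel 'I_n) sg : simple_graph adj -> connected_graph adj -> (0 < n)%N ->
  in_Gamma adj sg -> spec_rad (signed_adjmx adj sg) < rhoE adj.
Proof.
move=> Hs Hc n0 /andP [sgok Hlt].
set B := signed_adjmx adj sg.
have [Bsym Breal] := signed_facts Hs sgok.
set A := adjmx adj.
have Asym := adj_sym Hs; have Age0 := @adj_ge0 n adj.
have [k Ek] := sr_attained Bsym Breal n0.
set dk := spectral_diag B 0 k.
have dr : dk \is Num.real by apply: d_real.
have rn : row k (spectralmx B) != 0 by rewrite -nrm_eq0 row_nrm oner_eq0.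
have [x [xr xn Ex]] := RE Breal dr rn (row_eig Bsym Breal k).
set eps : algC := if 0 <= dk then 1 else -1.
have epsr : eps \is Num.real by rewrite /eps; case: ifP; rewrite ?rpredN real1.
have epsn : `|eps| = 1 by rewrite /eps; case: ifP; rewrite ?normrN normr1.
have epsd : eps * dk = `|dk|.
  rewrite /eps; case: ifP => H; first by rewrite mul1r ger0_norm.
  rewrite mulN1r ltr0_norm //; by move: H; rewrite real_leNgt ?real0 // => /negbFE.
have ExS : x *m (eps *: B) = `|dk| *: x by rewrite -scalemxAr Ex scalerA epsd.
have := U Hs Hc (S := eps *: B) (mu := `|dk|) _ _ _ _ xr xn (normr_real _) ExS.
case.
- by move=> i j; rewrite mxE [RHS]mxE Bsym.
- by move=> i j aij; rewrite !mxE (negbTE aij) mulr0.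
- by move=> i j aij; rewrite !mxE aij normrM epsn mul1r; case: (sg i j); rewrite ?normrN normr1.
- by move=> i j; rewrite mxE rpredM.
- move=> [a [b [ab H]]]; rewrite Ek; apply: lt_le_trans H _; exact: rhoE_ge.
move=> [nz pos].
have S0' : forall i j, ~~ adj i j -> (eps *: B) i j = 0.
  by move=> i j aij; rewrite !mxE (negbTE aij) mulr0.
have S1' : forall i j, adj i j -> `|(eps *: B) i j| = 1.
  by move=> i j aij; rewrite !mxE aij normrM epsn mul1r; case: (sg i j); rewrite ?normrN normr1.
have P1 := posvec S0' S1' xr nz pos ExS.
have Hpos : forall i, 0 < absv x 0 i by move=> i; rewrite mxE normr_gt0.
have H := PE Asym Age0 n0 Hpos P1.
by move: Hlt; rewrite Ek H => H2; move: (lt_eqF H2); rewrite eqxx.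
Qed.

Lemma partc n (adj : rel 'I_n) : simple_graph adj -> connected_graph adj -> (0 < n)%N ->
  Gamma_nonempty adj -> rhoGamma adj < rhoE adj.
Proof.
move=> Hs Hc n0 [sg0 H0].
have HF : forall sg, in_Gamma adj sg -> 0 <= spec_rad (signed_adjmx adj sg).
  move=> sg /andP [sgok _]; have [Bs Br] := signed_facts Hs sgok; exact: sr_ge0.
have [sg1 [_ H1 E1]] := bm_attained (r := index_enum _) (P := fun sg => in_Gamma adj sg)
   (F := fun sg => spec_rad (signed_adjmx adj sg)) HF (ex_intro2 _ _ sg0 (mem_index_enum _) H0).
rewrite /rhoGamma E1; exact: partc_one.
Qed.


Lemma qf_le_sr m (M : 'M[algC]_m) (y : 'rV[algC]_m) :
  (forall i j, M i j = M j i) -> (forall i j, 0 <= M i j) -> (forall i, 0 <= y 0 i) ->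
  qf M y <= spec_rad M * nrm y.
Proof.
move=> Ms M0 y0; have Mr : forall i j, M i j \is Num.real by move=> i j; apply: ger0_real.
apply: le_trans (R1 Ms Mr y); apply: real_ler_norm; apply: ger0_real; exact: qf_ge0.
Qed.

Lemma vert_le_edge n (adj : rel 'I_n) v w : simple_graph adj -> adj v w -> (1 < n)%N ->
  spec_rad (adjmx (del_vertex adj v)) <= spec_rad (adjmx (del_edge adj v w)).
Proof.
move=> Hs vw n1.
set M' := adjmx (del_vertex adj v).
have M's := adj_sym (sg_del_vertex v Hs); have M'r := @adj_real _ (del_vertex adj v).
have M'0 := @adj_ge0 _ (del_vertex adj v).
have n1' : (0 < n.-1)%N by rewrite -ltnS prednK // ltnW.
have [k Ek] := sr_attained M's M'r n1'.
set r := row k (spectralmx M').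
have Hr := RA M's M'0 (row_eig M's M'r k) (esym Ek).
have qr := qf_eig Hr.
set yt := \row_i (match unlift v i with Some j => absv r 0 j | None => 0 end) : 'rV[algC]_n.
have yv : yt 0 v = 0 by rewrite mxE unlift_none.
have hy : forall i, absv r 0 i = yt 0 (lift v i) by move=> i; rewrite [RHS]mxE liftK.
have hM : forall i j, M' i j = adjmx (del_edge adj v w) (lift v i) (lift v j).
  move=> i j; rewrite !mxE /del_vertex /del_edge !(eq_sym (lift v _) v) (negbTE (neq_lift v i)) (negbTE (neq_lift v j)).
  by rewrite /= andbF /= andbT.
have [Eq Nn] := qf_restr yv hy hM.
have rn : r != 0 by rewrite -nrm_eq0 row_nrm oner_eq0.
have N0 : 0 < nrm (absv r) by apply: nrm_gt0; rewrite absv_eq0.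
rewrite -(ler_pM2r N0) -qr -Eq -Nn.
apply: qf_le_sr; [apply: adj_sym; exact: sg_del_edge | exact: adj_ge0 |].
move=> i; rewrite mxE; case: (unlift v i) => [j|] //; exact: absv_ge0.
Qed.

Lemma parta2 n (adj : rel 'I_n) : simple_graph adj -> connected_graph adj -> (2 <= n)%N ->
  rhoV adj <= rhoE adj.
Proof.
move=> Hs Hc n2.
have Er0 : 0 <= rhoE adj.
  apply: bm_ge0 => p _; apply: sr_ge0; [apply: adj_sym; exact: sg_del_edge | apply: adj_real].
have HF : forall v : 'I_n, (fun _ => true) v -> 0 <= spec_rad (adjmx (del_vertex adj v)).
  move=> v _; apply: sr_ge0; [apply: adj_sym; exact: sg_del_vertex | apply: adj_real].
have BL := @bm_le _ _ (index_enum 'I_n) (fun _ => true)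
  (fun v => spec_rad (adjmx (del_vertex adj v))) (rhoE adj) HF Er0.
apply: BL.
move=> v _ _.
have [j jv] : exists j : 'I_n, j != v.
  have n0 : (0 < n)%N by apply: leq_trans n2.
  have [e|e] := eqVneq v (Ordinal n0).
    by exists (Ordinal n2); rewrite e; apply/eqP => /(congr1 val).
  by exists (Ordinal n0); rewrite eq_sym.
have [a [b [ab /eqP av bv]]] := L_cross Hc (p := pred1 v) (i := v) (j := j) (eqxx v) jv.
rewrite av in ab.
apply: le_trans (vert_le_edge Hs ab n2) _; exact: rhoE_ge.
Qed.

Lemma rhoV_ge n (adj : rel 'I_n) v : simple_graph adj ->
  spec_rad (adjmx (del_vertex adj v)) <= rhoV adj.
Proof.
move=> Hs.
have HF : forall v : 'I_n, (fun _ => true) v -> 0 <= spec_rad (adjmx (del_vertex adj v)).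
  move=> w _; apply: sr_ge0; [apply: adj_sym; exact: sg_del_vertex | apply: adj_real].
exact: (@bm_ge _ _ (index_enum 'I_n) (fun _ => true)
  (fun v => spec_rad (adjmx (del_vertex adj v))) v HF (mem_index_enum _) isT).
Qed.

Lemma rho_in_eigs m (M : 'M[algC]_m) : (forall i j, M i j = M j i) -> (forall i j, 0 <= M i j) ->
  (0 < m)%N -> spec_rad M \in eigs M.
Proof.
move=> Ms M0 m0; have Mr : forall i j, M i j \is Num.real by move=> i j; apply: ger0_real.
have [k Ek] := sr_attained Ms Mr m0.
have Hr := RA Ms M0 (row_eig Ms Mr k) (esym Ek).
have rn : row k (spectralmx M) != 0 by rewrite -nrm_eq0 row_nrm oner_eq0.
have ev : eigenvalue M (spec_rad M).
  by apply/eigenvalueP; exists (absv (row k (spectralmx M))) => //; rewrite absv_eq0.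
move: ev; rewrite eigenvalue_root_char.
by have /eqP -> := xchooseP (char_poly_splits M); rewrite root_prod_XsubC.
Qed.

Lemma seq2 (T : Type) (x0 : T) (s : seq T) : (2 <= size s)%N ->
  s = nth x0 s 0 :: nth x0 s 1 :: drop 2 s.
Proof. by case: s => [|a [|b t]] //= _; rewrite drop0. Qed.

Lemma parta1 n (adj : rel 'I_n) : simple_graph adj -> connected_graph adj -> (2 <= n)%N ->
  lambda (adjmx adj) 2 < rhoV adj.
Proof.
move=> Hs Hc n2.
have n0 : (0 < n)%N by apply: leq_trans n2.
set A := adjmx adj.
have Asym := adj_sym Hs; have Areal := @adj_real n adj; have Age0 := @adj_ge0 n adj.
set d := spectral_diag A; set P := spectralmx A.
set s := sorted_eigs A.
have sperm : perm_eq s (Dseq A) by rewrite /s /sorted_eigs perm_sort; exact: eigs_perm.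
have sz : size s = n by rewrite (perm_size sperm) size_Dseq.
have sD : forall z, z \in s -> exists k, z = d 0 k.
  by move=> z; rewrite (perm_mem sperm) => /mapP [k _ ->]; exists k.
have sreal : all (fun z => z \is Num.real) s.
  by apply/allP => z /sD [k ->]; exact: d_real.
have ssorted : sorted (fun x y => y <= x) s.
  apply: (sort_sorted_in (P := fun z : algC => z \is Num.real)).
    by move=> x y xr yr; rewrite real_leVge.
  by apply/allP => z zi; apply: (allP sreal); rewrite mem_sort.
have rho_s : spec_rad A \in s by rewrite mem_sort rho_in_eigs.
have L2 : lambda A 2 = nth 0 s 1 by [].
clearbody s.
have [s0 [s1 [s' Es]]] : exists s0 s1 s', s = s0 :: s1 :: s'.
  exists (nth 0 s 0), (nth 0 s 1), (drop 2 s).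
  by apply: seq2; rewrite sz.
rewrite L2 Es /=.
have hpath : all (fun y => y <= s0) (s1 :: s').
  apply: (order_path_min (leT := fun x y => y <= x)); last by move: ssorted; rewrite Es.
  by move=> x y z yx zy; apply: le_trans zy yx.
have hmax : forall z, z \in s -> z <= s0.
  move=> z; rewrite Es in_cons => /orP [/eqP -> //|]; by move/(allP hpath).
have s10 : s1 <= s0 by move: hpath => /= /andP [].
set rho := spec_rad A.
have s0in : s0 \in s by rewrite Es mem_head.
have [k1 Ek1] := sD _ s0in.
have s0rho : s0 = rho.
  apply/le_anti; rewrite hmax // andbT Ek1.
  apply: le_trans (real_ler_norm (d_real Asym Areal k1)) _; exact: d_le_sr.
have [k2 [k12 Ek2]] : exists k2, k2 != k1 /\ s1 = d 0 k2.
  have [e|ne] := eqVneq s1 s0.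
    have : [exists k2, (k2 != k1) && (d 0 k2 == s0)].
      apply: contraT; rewrite negb_exists => /forallP H.
      have c2 : (2 <= count_mem s0 s)%N by rewrite Es e /= eqxx.
      move: c2; rewrite (permP sperm) /Dseq count_map.
      have : leq (count (preim (fun k => d 0 k) (pred1 s0)) (index_enum 'I_n)) (count_mem k1 (index_enum 'I_n)).
        apply: sub_count => k /= /eqP dk; apply/eqP; apply: contraNeq (H k) => kk1.
        by rewrite kk1 dk eqxx.
      rewrite count_uniq_mem ?index_enum_uniq // mem_index_enum => H1 H2.
      by move: (leq_trans H2 H1).
    move=> /existsP [k2 /andP [k21 /eqP dk2]]; exists k2; split => //; by rewrite e dk2.
  have s1in : s1 \in s by rewrite Es !in_cons eqxx orbT.
  have [k2 Ek2] := sD _ s1in; exists k2; split => //.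
  by apply: contra_neq ne => kk; rewrite Ek2 kk -Ek1.
have s1rho : s1 < rho.
  rewrite lt_def -s0rho s10 andbT.
  apply/eqP => E; apply: (TS Hs Hc k12); [by rewrite -/d -Ek2 -E s0rho | by rewrite -/d -Ek1 s0rho].
have e1 : row k1 P *m A = rho *: row k1 P by rewrite row_eig // -/d -Ek1 s0rho.
have e2 : row k2 P *m A = s1 *: row k2 P by rewrite row_eig // -/d -Ek2.
have p2n : row k2 P != 0 by rewrite -nrm_eq0 row_nrm oner_eq0.
have [v Hv] := rV_neq0 p2n.
have n11 : \sum_i P k1 i * (P k1 i)^* = 1.
  by rewrite -[RHS](row_nrm A k1); apply: eq_bigr => i _; rewrite !mxE.
have n22 : \sum_i P k2 i * (P k2 i)^* = 1.
  by rewrite -[RHS](row_nrm A k2); apply: eq_bigr => i _; rewrite !mxE.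
have n12 : \sum_i P k1 i * (P k2 i)^* = 0.
  rewrite -[RHS](row_inner A (k:=k1) (l:=k2)); last by rewrite eq_sym.
  by apply: eq_bigr => i _; rewrite !mxE.
have n21 : \sum_i P k2 i * (P k1 i)^* = 0.
  by rewrite -[RHS](row_inner A k12); apply: eq_bigr => i _; rewrite !mxE.
have Hv' : P k2 v != 0 by move: Hv; rewrite mxE.
set a := P k2 v; set b := P k1 v.
set y := a *: row k1 P - b *: row k2 P.
have yv : y 0 v = 0 by rewrite !mxE mulrC subrr.
have Q : qf A y = rho * (a * a^*) + s1 * (b * b^*).
  have -> : qf A y = \sum_i ((a * rho) * P k1 i - (b * s1) * P k2 i) * (a^* * (P k1 i)^* - b^* * (P k2 i)^*).
    rewrite qfE /y mulmxBl -!scalemxAl e1 e2 !scalerA mxE; apply: eq_bigr => i _.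
    by rewrite !mxE rmorphB !rmorphM.
  rewrite (eq_bigr (fun i => (a*rho*a^*) * (P k1 i * (P k1 i)^*) - (a*rho*b^*) * (P k1 i * (P k2 i)^*)
     - (b*s1*a^*) * (P k2 i * (P k1 i)^*) + (b*s1*b^*) * (P k2 i * (P k2 i)^*))); last by move=> i _; ring.
  rewrite big_split /= !sumrB -!mulr_sumr n11 n22 n12 n21; ring.
have Ny : nrm y = a * a^* + b * b^*.
  have -> : nrm y = \sum_i (a * P k1 i - b * P k2 i) * (a^* * (P k1 i)^* - b^* * (P k2 i)^*).
    by apply: eq_bigr => i _; rewrite !mxE rmorphB !rmorphM.
  rewrite (eq_bigr (fun i => (a*a^*) * (P k1 i * (P k1 i)^*) - (a*b^*) * (P k1 i * (P k2 i)^*)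
     - (b*a^*) * (P k2 i * (P k1 i)^*) + (b*b^*) * (P k2 i * (P k2 i)^*))); last by move=> i _; ring.
  rewrite big_split /= !sumrB -!mulr_sumr n11 n22 n12 n21; ring.
set A' := adjmx (del_vertex adj v).
have A's := adj_sym (sg_del_vertex v Hs); have A'r := @adj_real _ (del_vertex adj v).
set y' := \row_i y 0 (lift v i) : 'rV[algC]_n.-1.
have hy : forall i, y' 0 i = y 0 (lift v i) by move=> i; rewrite mxE.
have hM : forall i j, A' i j = A (lift v i) (lift v j) by move=> i j; rewrite !mxE.
have [Eq Nn] := qf_restr yv hy hM.
have aa0 : 0 < a * a^* by rewrite -normCK exprn_gt0 // normr_gt0.
have bb0 : 0 <= b * b^* by rewrite -normCK exprn_ge0.
have s1r : s1 \is Num.real by apply: (allP sreal); rewrite Es !in_cons eqxx orbT.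
have rhor : rho \is Num.real by apply: ger0_real; apply: sr_ge0.
have Qr : qf A y \is Num.real.
  by rewrite Q rpredD // rpredM // ger0_real // ltW.
have Nyp : 0 < nrm y by rewrite Ny ltr_wpDr.
have H3 : s1 * nrm y < qf A y by rewrite Q Ny mulrDr ltrD2r ltr_pM2r.
have H4 : qf A y <= spec_rad A' * nrm y.
  apply: le_trans (real_ler_norm Qr) _; rewrite Eq Nn; exact: R1.
have H5 : s1 < spec_rad A' by rewrite -(ltr_pM2r Nyp); exact: lt_le_trans H3 H4.
apply: lt_le_trans H5 _; exact: rhoV_ge.
Qed.


Unset Implicit Arguments.

Theorem mainTheorem3 (n : nat) (adj : rel 'I_n) :
  simple_graph adj -> connected_graph adj -> (2 <= n)%N ->
  [/\ lambda (adjmx adj) 2 < rhoV adj /\ rhoV adj <= rhoE adj,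
      ~ bipartite adj -> - lambda (adjmx adj) n < rhoE adj
    & Gamma_nonempty adj -> rhoGamma adj < rhoE adj].
Proof.
move=> Hs Hc n2; split.
- split; [exact: parta1 | exact: parta2].
- exact: partb.
- move=> HG; apply: partc => //; exact: leq_trans n2.
Qed.
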